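(* Let $(X,d)$ be a metric space, $\alpha:X\times X\rightarrow[0,+\infty)$ and $T:X\rightarrow X$. Assume that $T$ is $\alpha$--admissible and $\alpha$--contractive of Meir--Keeler type. Let $x,y\in X$ with $\alpha(x,y)\geq1$. Then $\alpha(T^{n}x,T^{n}y)\geq1$ for all $n\in\mathbb{N}$, the sequence $\{d(T^{n}x,T^{n}y)\}_{n}$ is nonincreasing, and $d(T^{n}x,T^{n}y)\rightarrow0$ as $n\rightarrow\infty$.
   Context: $\mathbb{N}$ denotes the set of non-negative integers and $T^n$ is the $n$-th iterate of $T$ ($T^0$ the identity). $T$ is called an $\alpha$--contractive mapping of Meir--Keeler type if for every $\varepsilon>0$ there exists $\delta(\varepsilon)>0$ such that for all $x,y\in X$: $\varepsilon\leq d(x,y)<\varepsilon+\delta(\varepsilon)$ implies $\alpha(x,y)\,d(Tx,Ty)<\varepsilon$. $T$ is called $\alpha$--admissible if for all $x,y\in X$, $\alpha(x,y)\geq1$ implies $\alpha(Tx,Ty)\geq1$. *)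

(* Defs.v *)
From Stdlib Require Import Reals.
Open Scope R_scope.

Definition is_metric {X : Type} (d : X -> X -> R) : Prop :=
  (forall x y, 0 <= d x y) /\
  (forall x y, d x y = 0 <-> x = y) /\
  (forall x y, d x y = d y x) /\
  (forall x y z, d x z <= d x y + d y z).

Definition iterate {X : Type} (T : X -> X) (n : nat) (x : X) : X :=
  Nat.iter n T x.

Definition alpha_admissible {X : Type} (alpha : X -> X -> R) (T : X -> X) : Prop :=
  forall x y, alpha x y >= 1 -> alpha (T x) (T y) >= 1.

Definition alpha_MK_contractive {X : Type} (d : X -> X -> R)
    (alpha : X -> X -> R) (T : X -> X) : Prop :=
  forall eps, eps > 0 -> exists delta, delta > 0 /\
    forall x y, eps <= d x y < eps + delta -> alpha x y * d (T x) (T y) < eps.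

(* Main.v *)
Require Import Defs.
From Stdlib Require Import Reals Lra.
Open Scope R_scope.

Theorem lemma2 (X : Type) (d : X -> X -> R) (alpha : X -> X -> R) (T : X -> X)
  (Hd : is_metric d)
  (Halpha : forall x y, 0 <= alpha x y)
  (Hadm : alpha_admissible alpha T)
  (HMK : alpha_MK_contractive d alpha T)
  (x y : X) (Hxy : alpha x y >= 1) :
  (forall n : nat, alpha (iterate T n x) (iterate T n y) >= 1) /\
  (forall n : nat, d (iterate T (S n) x) (iterate T (S n) y)
                   <= d (iterate T n x) (iterate T n y)) /\
  Un_cv (fun n => d (iterate T n x) (iterate T n y)) 0.
Proof.
  destruct Hd as [Hpos [Hzero [Hsym Htri]]].
  assert (HA : forall n : nat, alpha (iterate T n x) (iterate T n y) >= 1).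
  { induction n; simpl; [exact Hxy|]. apply Hadm. exact IHn. }
  assert (Hstep : forall u v, alpha u v >= 1 -> d u v > 0 -> d (T u) (T v) < d u v).
  { intros u v Ha Hp. destruct (HMK (d u v) Hp) as [del [Hdel H]].
    specialize (H u v ltac:(lra)). specialize (Hpos (T u) (T v)).
    assert (d (T u) (T v) <= alpha u v * d (T u) (T v)) by nra. lra. }
  assert (HD : forall n : nat, d (iterate T (S n) x) (iterate T (S n) y)
                   <= d (iterate T n x) (iterate T n y)).
  { intro n. change (iterate T (S n) x) with (T (iterate T n x)).
    change (iterate T (S n) y) with (T (iterate T n y)).
    set (u := iterate T n x) in *. set (v := iterate T n y) in *.
    destruct (Rle_lt_or_eq_dec 0 (d u v) (Hpos u v)) as [Hp|He].
    - left. apply Hstep; [apply HA|exact Hp].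
    - assert (Huv : u = v) by (apply Hzero; auto). rewrite <- He. rewrite Huv.
      assert (d (T v) (T v) = 0) by (apply Hzero; auto). lra. }
  split; [exact HA|]. split; [exact HD|].
  set (a := fun n => d (iterate T n x) (iterate T n y)).
  assert (Hdec : Un_decreasing a) by exact HD.
  assert (Hlb : has_lb a).
  { exists 0. intros r [i ->]. unfold opp_seq. specialize (Hpos (iterate T i x) (iterate T i y)).
    unfold a. lra. }
  destruct (decreasing_cv a Hdec Hlb) as [l Hl].
  assert (Hmono : forall n m, (n <= m)%nat -> a m <= a n).
  { intros n m Hnm. induction Hnm; [lra|]. specialize (Hdec m). lra. }
  assert (Hge : forall n, l <= a n).
  { intros n. destruct (Rle_or_lt l (a n)) as [h|h]; [exact h|exfalso].
    destruct (Hl (l - a n) ltac:(lra)) as [N HN].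
    specialize (HN (max N n) (Nat.le_max_l _ _)).
    specialize (Hmono n (max N n) (Nat.le_max_r _ _)).
    unfold R_dist in HN. rewrite Rabs_left in HN; lra. }
  assert (Hl0 : l = 0).
  { destruct (Rle_or_lt l 0) as [h|h].
    - destruct (Req_dec l 0) as [e|ne]; [exact e|exfalso].
      destruct (Hl (- l) ltac:(lra)) as [N HN]. specialize (HN N (le_n N)).
      specialize (Hpos (iterate T N x) (iterate T N y)).
      unfold R_dist, a in HN. rewrite Rabs_right in HN by lra. lra.
    - exfalso. destruct (HMK l h) as [del [Hdel H]].
      destruct (Hl del Hdel) as [N HN]. specialize (HN N (le_n N)).
      unfold R_dist in HN. pose proof (Hge N) as HgeN. pose proof (Hge (S N)) as HgeS.
      assert (HN2 : a N - l < del) by (eapply Rle_lt_trans; [apply RRle_abs|exact HN]). clear HN. rename HN2 into HN.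
      specialize (H (iterate T N x) (iterate T N y)). unfold a in HgeN, HN. specialize (H ltac:(split; lra)).
      unfold a in HgeS. simpl in HgeS.
      specialize (HA N). specialize (Hpos (T (iterate T N x)) (T (iterate T N y))).
      nra. }
  subst l. exact Hl.
Qed.
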